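(* For every constant $c>0$ there exist constants $\epsilon>0$ and $c'>0$ such that for every odd $n$, with $\alpha=c\sqrt n$ and the hockey stick function $hs_\alpha(x)=\min\big(\alpha,\frac{2\alpha}{n}\sum_{i=1}^nx_i\big)$ on $\{0,1\}^n$, it holds that $\mathcal D^{\to,U}_{\epsilon}(hs_\alpha^+)\ge c'n$.
   Context: The XOR-function of $f$ is $f^+(x,y)=f(x+y)$ (coordinatewise addition mod 2). Distributional one-way communication complexity under the uniform distribution: $\mathcal D^{\to,U}_\epsilon(f^+)$ is the minimum, over deterministic one-way protocols $\Pi$ in which Alice (holding $x$) sends a single message to Bob (holding $y$) who outputs a real number $\Pi(x,y)$ depending only on the message and $y$, satisfying $\mathbb E_{x,y\sim U(\mathbb F_2^n)}[(\Pi(x,y)-f^+(x,y))^2]\le\epsilon$, of the maximum message length in bits. *)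

(* Defs.v *)
From Stdlib Require Import Reals List.
Import ListNotations.
Open Scope R_scope.

(* Points of F_2^n, represented as bit lists of length n. *)
Fixpoint cube (n : nat) : list (list bool) :=
  match n with
  | O => [ [] ]
  | S m => map (cons false) (cube m) ++ map (cons true) (cube m)
  end.

Fixpoint xorv (x y : list bool) : list bool :=
  match x, y with
  | a :: x', b :: y' => xorb a b :: xorv x' y'
  | _, _ => []
  end.

Definition weight (x : list bool) : R :=
  fold_right (fun (b : bool) s => (if b then 1 else 0) + s) 0 x.

Definition sumR {A : Type} (l : list A) (f : A -> R) : R :=
  fold_right (fun a s => f a + s) 0 l.

Definition hs (n : nat) (alpha : R) (x : list bool) : R :=
  Rmin alpha (2 * alpha / INR n * weight x).

(* XOR-function f^+(x,y) = f(x+y) *)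
Definition xor_fun (f : list bool -> R) (x y : list bool) : R := f (xorv x y).

(* A deterministic one-way protocol: Alice sends the bit string M x,
   Bob outputs B (M x) y.  Its expected squared error under the uniform
   distribution on F_2^n x F_2^n: *)
Definition proto_err (n : nat) (F : list bool -> list bool -> R)
  (M : list bool -> list bool) (B : list bool -> list bool -> R) : R :=
  / (2 ^ n * 2 ^ n) *
  sumR (cube n) (fun x => sumR (cube n) (fun y => (B (M x) y - F x y) ^ 2)).

Definition proto_cost (n : nat) (M : list bool -> list bool) : nat :=
  fold_right (fun x m => Nat.max (length (M x)) m) 0%nat (cube n).

(* D^{->,U}_eps(F) >= k  iff every protocol with error <= eps costs >= k *)
Definition D_one_way_ge (n : nat) (eps : R) (F : list bool -> list bool -> R)
  (k : R) : Prop :=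
  forall (M : list bool -> list bool) (B : list bool -> list bool -> R),
    proto_err n F M B <= eps -> k <= INR (proto_cost n M).

(* Main.v *)
Require Import Defs.
From Stdlib Require Import Reals Arith Lra Lia Psatz List Classical Bool.
Import ListNotations.
Open Scope R_scope.

Lemma sumR_app {A} (l1 l2 : list A) f : sumR (l1 ++ l2) f = sumR l1 f + sumR l2 f.
Proof. induction l1; simpl; [lra|]. unfold sumR in *; simpl. rewrite IHl1. lra. Qed.

Lemma sumR_map {A B} (g : A -> B) l f : sumR (map g l) f = sumR l (fun a => f (g a)).
Proof. induction l; simpl; auto. unfold sumR in *; simpl. now rewrite IHl. Qed.

Lemma sumR_ext {A} (l : list A) f g : (forall a, In a l -> f a = g a) -> sumR l f = sumR l g.
Proof. induction l; intros H; simpl; auto. unfold sumR in *; simpl.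
  rewrite H by now left. rewrite IHl; auto. intros; apply H; now right. Qed.

Lemma sumR_le {A} (l : list A) f g : (forall a, In a l -> f a <= g a) -> sumR l f <= sumR l g.
Proof. induction l; intros H; simpl. unfold sumR; simpl; lra. unfold sumR in *; simpl.
  assert (f a <= g a) by (apply H; now left).
  assert (fold_right (fun a0 s => f a0 + s) 0 l <= fold_right (fun a0 s => g a0 + s) 0 l).
  { apply IHl; intros; apply H; now right. } lra. Qed.

Lemma sumR_plus {A} (l : list A) f g : sumR l (fun a => f a + g a) = sumR l f + sumR l g.
Proof. induction l; unfold sumR in *; simpl; [lra|]. rewrite IHl; lra. Qed.

Lemma sumR_scal {A} (l : list A) c f : sumR l (fun a => c * f a) = c * sumR l f.
Proof. induction l; unfold sumR in *; simpl; [lra|]. rewrite IHl; lra. Qed.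

Lemma sumR_nonneg {A} (l : list A) f : (forall a, In a l -> 0 <= f a) -> 0 <= sumR l f.
Proof. intros H. replace 0 with (sumR l (fun _ => 0)). apply sumR_le; auto.
  induction l; unfold sumR in *; simpl; auto. rewrite IHl; [lra|]. intros; apply H; now right. Qed.

Lemma sumR_swap {A B} (l1 : list A) (l2 : list B) f :
  sumR l1 (fun a => sumR l2 (fun b => f a b)) = sumR l2 (fun b => sumR l1 (fun a => f a b)).
Proof. induction l1; simpl.
  - unfold sumR; simpl. induction l2; simpl; auto. rewrite <- IHl2; lra.
  - change (sumR (a :: l1) ?g) with (g a + sumR l1 g). rewrite IHl1.
    rewrite <- sumR_plus. apply sumR_ext. intros. reflexivity. Qed.

Lemma sumR_const {A} (l : list A) c : sumR l (fun _ => c) = INR (length l) * c.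
Proof. induction l; unfold sumR in *; simpl length; [simpl; lra|]. 
  change (fold_right (fun _ s => c + s) 0 (a :: l)) with (c + fold_right (fun _ s => c + s) 0 l).
  rewrite IHl, S_INR. lra. Qed.

Lemma cube_len n x : In x (cube n) -> length x = n.
Proof. revert x; induction n; simpl; intros x H.
  - destruct H as [<-|[]]; auto.
  - apply in_app_or in H; destruct H as [H|H]; apply in_map_iff in H; destruct H as [y [<- Hy]];
    simpl; f_equal; auto. Qed.

Lemma in_cube x : In x (cube (length x)).
Proof. induction x; simpl; auto. apply in_or_app. destruct a; [right|left]; apply in_map; auto. Qed.

Lemma cube_length n : length (cube n) = (2 ^ n)%nat.
Proof. induction n; simpl; auto. rewrite length_app, !length_map, IHn. lia. Qed.

Lemma sumR_cube_S n f : sumR (cube (S n)) f =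
  sumR (cube n) (fun z => f (false :: z)) + sumR (cube n) (fun z => f (true :: z)).
Proof. simpl. rewrite sumR_app, !sumR_map. reflexivity. Qed.

Lemma shift n a f : length a = n ->
  sumR (cube n) (fun y => f (xorv a y)) = sumR (cube n) f.
Proof. revert a f; induction n; intros a f Ha.
  - destruct a; [|discriminate]. reflexivity.
  - destruct a as [|b a]; [discriminate|]. simpl in Ha; injection Ha as Ha.
    rewrite !sumR_cube_S. simpl xorv.
    rewrite (IHn a (fun z => f (xorb b false :: z)) Ha).
    rewrite (IHn a (fun z => f (xorb b true :: z)) Ha).
    destruct b; simpl; lra. Qed.

Lemma xorv_len a y : length a = length y -> length (xorv a y) = length a.
Proof. revert y; induction a; destruct y; simpl; intros; try discriminate; auto. Qed.

Lemma xorv_assoc a b c : xorv a (xorv b c) = xorv (xorv a b) c.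
Proof. revert b c; induction a; destruct b, c; simpl; auto. f_equal; [ | auto]. match goal with |- context[xorb ?x (xorb ?y ?z)] => destruct x, y, z end; reflexivity. Qed.

Lemma xorv_self a y : length a = length y -> xorv (xorv a a) y = y.
Proof. revert y; induction a; destruct y; simpl; intros; try discriminate; auto.
  f_equal; auto. destruct a; reflexivity. Qed.

Lemma xorv_comm a b : xorv a b = xorv b a.
Proof. revert b; induction a; destruct b; simpl; auto. f_equal; [ | auto]. match goal with |- xorb ?x ?y = _ => destruct x, y end; reflexivity. Qed.

Fixpoint wn (z : list bool) : nat := match z with [] => 0%nat | b :: z' => ((if b then 1 else 0) + wn z')%nat end.

Lemma weight_wn z : weight z = INR (wn z).
Proof. induction z; simpl; auto. unfold weight in *; simpl. rewrite IHz, plus_INR. destruct a; simpl; lra. Qed.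

Lemma weight_cons b z : weight (b :: z) = (if b then 1 else 0) + weight z.
Proof. reflexivity. Qed.

Lemma wn_le z : (wn z <= length z)%nat.
Proof. induction z; simpl; auto. destruct a; lia. Qed.

Lemma weight_nonneg z : 0 <= weight z.
Proof. rewrite weight_wn. apply pos_INR. Qed.

Fixpoint wa (u z : list bool) : R := match u, z with a :: u', b :: z' => (if a && b then 1 else 0) + wa u' z' | _, _ => 0 end.
Fixpoint wb (u z : list bool) : R := match u, z with a :: u', b :: z' => (if negb a && b then 1 else 0) + wb u' z' | _, _ => 0 end.

Lemma wab_weight u z : length u = length z -> weight z = wa u z + wb u z.
Proof. revert z; induction u; destruct z; simpl; intros; try discriminate. unfold weight; simpl; lra.
  rewrite ?weight_cons, IHu by auto. destruct a, b; simpl; lra. Qed.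

Lemma wab_xor u z : length u = length z -> weight (xorv u z) = (weight u - wa u z) + wb u z.
Proof. revert z; induction u; destruct z; simpl; intros; try discriminate. unfold weight; simpl; lra.
  rewrite ?weight_cons, IHu by auto. destruct a, b; simpl; lra. Qed.

Lemma wa_bounds u z : 0 <= wa u z <= weight u.
Proof. revert z; induction u; intros z; destruct z; simpl; try (split; lra).
  - pose proof (weight_nonneg u). destruct a; lra.
  - specialize (IHu z). destruct a, b; simpl; lra. Qed.

Lemma wb_nonneg u z : 0 <= wb u z.
Proof. revert z; induction u; destruct z; simpl; try lra. specialize (IHu z). destruct a, b; simpl; lra. Qed.

Lemma WF (h : R -> R) n : sumR (cube n) (fun z => h (weight (false :: z))) = sumR (cube n) (fun z => h (weight z)).
Proof. apply sumR_ext; intros. rewrite weight_cons. f_equal. simpl; lra. Qed.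
Lemma WT (h : R -> R) n : sumR (cube n) (fun z => h (weight (true :: z))) = sumR (cube n) (fun z => h (1 + weight z)).
Proof. apply sumR_ext; intros. rewrite weight_cons. reflexivity. Qed.
Lemma Z0 {A} (l : list A) (h : R -> R) k : sumR l (fun z => h (0 + k z)) = sumR l (fun z => h (k z)).
Proof. apply sumR_ext; intros. now rewrite Rplus_0_l. Qed.

Lemma prod_lemma u : forall (f g : R -> R),
  sumR (cube (length u)) (fun z => f (wa u z) * g (wb u z)) =
  sumR (cube (wn u)) (fun s => f (weight s)) * sumR (cube (length u - wn u)) (fun t => g (weight t)).
Proof. induction u as [|a u IH]; intros f g.
  - simpl. unfold sumR; simpl. lra.
  - simpl length. rewrite sumR_cube_S. destruct a; simpl wn; simpl wa; simpl wb; simpl andb; simpl negb.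
    + replace (S (length u) - (1 + wn u))%nat with (length u - wn u)%nat by lia.
      replace (1 + wn u)%nat with (S (wn u)) by lia.
      rewrite sumR_cube_S, WF, WT.
      rewrite (IH (fun x => f (0 + x)) (fun x => g (0 + x))).
      rewrite (IH (fun x => f (1 + x)) (fun x => g (0 + x))).
      rewrite !(Z0 _ g weight), (Z0 _ f weight). replace (S (length u) - S (wn u))%nat with (length u - wn u)%nat by lia. lra.
    + pose proof (wn_le u).
      replace (S (length u) - wn u)%nat with (S (length u - wn u)) by lia.
      replace (0 + wn u)%nat with (wn u) by lia.
      rewrite (sumR_cube_S (length u - wn u)), WF, WT.
      rewrite (IH (fun x => f (0 + x)) (fun x => g (0 + x))).
      rewrite (IH (fun x => f (0 + x)) (fun x => g (1 + x))).
      rewrite !(Z0 _ f weight), (Z0 _ g weight). lra.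
Qed.

Lemma Q1 d : sumR (cube d) (fun s => (2 * weight s - INR d) ^ 2) = INR d * 2 ^ d.
Proof. induction d. unfold sumR; simpl; lra.
  rewrite sumR_cube_S, S_INR. simpl pow.
  rewrite <- sumR_plus.
  transitivity (sumR (cube d) (fun z => 2 * (2 * weight z - INR d) ^ 2 + 2)).
  { apply sumR_ext; intros. rewrite ?weight_cons. simpl. lra. }
  rewrite sumR_plus, sumR_scal, IHd, sumR_const, cube_length, pow_INR. simpl (INR 2). replace (1+1) with 2 by lra. lra.
Qed.

Definition ind (b : Prop) {D : {b} + {~ b}} : R := if D then 1 else 0.

Lemma Q2 m : sumR (cube m) (fun t => if Rle_dec (2 * weight t) (INR m) then 1 else 0) >= 2 ^ m / 2.
Proof.
  set (ones := repeat true m).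
  assert (Hl : length ones = m) by apply repeat_length.
  assert (Hw : forall t, length t = m -> weight (xorv ones t) = INR m - weight t).
  { subst ones. clear Hl. induction m; intros t Ht. destruct t; [|discriminate]. simpl. unfold weight; simpl; lra.
    destruct t; [discriminate|]. simpl in Ht; injection Ht as Ht. cbn [repeat xorv]. rewrite !weight_cons, IHm, S_INR by auto.
    destruct b; simpl; lra. }
  assert (H: sumR (cube m) (fun t => (if Rle_dec (2 * weight (xorv ones t)) (INR m) then 1 else 0) + (if Rle_dec (2 * weight t) (INR m) then 1 else 0)) >= sumR (cube m) (fun _ => 1)).
  { apply Rle_ge, sumR_le. intros t Ht. rewrite Hw by (eapply cube_len; eauto).
    destruct Rle_dec, Rle_dec; lra. }
  rewrite sumR_plus, sumR_const, cube_length, pow_INR in H. simpl (INR 2) in H.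
  rewrite (shift m ones (fun t => if Rle_dec (2 * weight t) (INR m) then 1 else 0)) in H by auto.
  replace (1+1) with 2 in H by lra. lra.
Qed.

Lemma pw (n a b d : R) : 0 <= a <= d -> 0 <= b -> 2 * b <= n - d ->
  (Rmin (a + b) (n / 2) - Rmin (d - a + b) (n / 2)) ^ 2 >= (2 * a - d) ^ 2 / 4.
Proof. intros Ha Hb Hn. unfold Rmin.
  destruct (Rle_dec (a + b) (n / 2)), (Rle_dec (d - a + b) (n / 2)); simpl.
  - replace (a + b - (d - a + b)) with (2 * a - d) by ring. assert (0 <= (2*a-d)^2) by apply pow2_ge_0. lra.
  - assert (n / 2 - (a + b) >= d / 2 - a) by lra. assert (d / 2 - a >= 0) by lra. nra.
  - assert (n / 2 - (d - a + b) >= a - d / 2) by lra. assert (a - d / 2 >= 0) by lra. nra.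
  - lra.
Qed.

Lemma E_bound u : 
  sumR (cube (length u)) (fun z => (Rmin (weight z) (INR (length u) / 2) - Rmin (weight (xorv u z)) (INR (length u) / 2)) ^ 2)
  >= weight u * 2 ^ (length u) / 8.
Proof.
  set (n := length u). set (d := weight u).
  apply Rge_trans with (sumR (cube n) (fun z => ((2 * wa u z - d) ^ 2 / 4) * (if Rle_dec (2 * wb u z) (INR (n - wn u)) then 1 else 0))).
  - apply Rle_ge, sumR_le. intros z Hz. assert (Hl: length u = length z) by (symmetry; apply cube_len; auto).
    rewrite (wab_weight u z Hl), (wab_xor u z Hl). fold d.
    destruct Rle_dec as [H|H].
    + rewrite Rmult_1_r. apply Rge_le. apply pw. apply wa_bounds. apply wb_nonneg.
      rewrite minus_INR in H by apply wn_le. rewrite <- weight_wn in H. exact H.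
    + rewrite Rmult_0_r. apply pow2_ge_0.
  - unfold n. rewrite (prod_lemma u (fun a => (2 * a - d) ^ 2 / 4) (fun b => if Rle_dec (2 * b) (INR (length u - wn u)) then 1 else 0)).
    pose proof (Q2 (length u - wn u)) as H2.
    assert (H1 : sumR (cube (wn u)) (fun s => (2 * weight s - d) ^ 2 / 4) = INR (wn u) * 2 ^ wn u / 4).
    { unfold d; rewrite weight_wn. rewrite <- Q1. unfold Rdiv. rewrite Rmult_comm, <- sumR_scal. apply sumR_ext; intros; lra. }
    rewrite H1. unfold d; rewrite weight_wn.
    assert (He: 2 ^ length u = 2 ^ wn u * 2 ^ (length u - wn u)).
    { rewrite <- pow_add. f_equal. pose proof (wn_le u). lia. }
    rewrite He.
    assert (0 <= INR (wn u) * 2 ^ wn u / 4).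
    { apply Rmult_le_pos; [apply Rmult_le_pos; [apply pos_INR| apply pow_le; lra] | lra]. }
    set (P := 2 ^ (length u - wn u)) in *. set (Q := 2 ^ wn u) in *.
    nra.
Qed.

Lemma Rmin_scal k p q : 0 < k -> Rmin (k * p) (k * q) = k * Rmin p q.
Proof. intros Hk. unfold Rmin. destruct (Rle_dec p q), (Rle_dec (k*p) (k*q)); try reflexivity; nra. Qed.

Lemma hs_eq n alpha z : (0 < n)%nat -> 0 < alpha ->
  hs n alpha z = (2 * alpha / INR n) * Rmin (weight z) (INR n / 2).
Proof. intros Hn Ha. unfold hs. assert (0 < INR n) by (apply lt_0_INR; auto).
  rewrite <- Rmin_scal by (apply Rdiv_lt_0_compat; lra).
  rewrite Rmin_comm. f_equal. field. lra. Qed.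

Lemma D_bound n c x x' : (0 < n)%nat -> 0 < c -> length x = n -> length x' = n ->
  4 * weight (xorv x x') >= INR n ->
  sumR (cube n) (fun y => (hs n (c * sqrt (INR n)) (xorv x y) - hs n (c * sqrt (INR n)) (xorv x' y)) ^ 2)
  >= c ^ 2 * 2 ^ n / 8.
Proof. intros Hn Hc Hx Hx' Hw.
  assert (HnR : 0 < INR n) by (apply lt_0_INR; auto).
  assert (Hs : 0 < sqrt (INR n)) by (apply sqrt_lt_R0; auto).
  set (alpha := c * sqrt (INR n)).
  assert (Ha : 0 < alpha) by (unfold alpha; nra).
  set (k := 2 * alpha / INR n).
  set (u := xorv x' x).
  assert (Hu : length u = n) by (unfold u; rewrite xorv_len; lia).
  assert (Heq: sumR (cube n) (fun y => (hs n alpha (xorv x y) - hs n alpha (xorv x' y)) ^ 2) =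
    sumR (cube n) (fun y => k ^ 2 * (Rmin (weight (xorv x y)) (INR n / 2) - Rmin (weight (xorv u (xorv x y))) (INR n / 2)) ^ 2)).
  { apply sumR_ext. intros y Hy.
       assert (length y = n) by (apply cube_len; auto).
       rewrite !hs_eq by auto. fold k.
       replace (xorv u (xorv x y)) with (xorv x' y).
       - ring.
       - unfold u. rewrite xorv_assoc, <- (xorv_assoc x' x x), (xorv_comm x' (xorv x x)), xorv_self; auto; lia. }
  rewrite Heq. rewrite (shift n x (fun z => k ^ 2 * (Rmin (weight z) (INR n / 2) - Rmin (weight (xorv u z)) (INR n / 2)) ^ 2)) by auto.
  rewrite sumR_scal.
  pose proof (E_bound u) as HE. rewrite Hu in HE.
  assert (Hwu : weight u = weight (xorv x x')) by (unfold u; now rewrite xorv_comm).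
  rewrite Hwu in HE.
  assert (Hk2 : k ^ 2 = 4 * c ^ 2 / INR n).
  { unfold k, alpha. unfold Rdiv. rewrite !Rpow_mult_distr. simpl. rewrite !Rmult_1_r.
    replace (2 * (c * sqrt (INR n)) * / INR n * (2 * (c * sqrt (INR n)) * / INR n)) with
      (4 * c * c * (sqrt (INR n) * sqrt (INR n)) * / INR n * / INR n) by ring.
    rewrite sqrt_sqrt by lra. field. lra. }
  rewrite Hk2.
  assert (H2 : 0 < 2 ^ n) by (apply pow_lt; lra).
  assert (0 < c ^ 2) by (apply pow_lt; lra).
  apply Rle_ge.
  apply Rle_trans with (4 * c ^ 2 / INR n * (weight (xorv x x') * 2 ^ n / 8)).
  - apply Rmult_le_reg_l with (INR n); auto.
    replace (INR n * (4 * c ^ 2 / INR n * (weight (xorv x x') * 2 ^ n / 8))) with (c ^ 2 * 2 ^ n / 8 * (4 * weight (xorv x x'))) by (field; lra).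
    replace (INR n * (c ^ 2 * 2 ^ n / 8)) with (c ^ 2 * 2 ^ n / 8 * INR n) by ring.
    apply Rmult_le_compat_l; [|lra]. apply Rmult_le_pos; [|lra]. nra.
  - apply Rmult_le_compat_l; [|lra]. apply Rmult_le_pos; [lra|]. left; apply Rinv_0_lt_compat; lra.
Qed.

Lemma sum_pow_wn q n : sumR (cube n) (fun z => q ^ wn z) = (1 + q) ^ n.
Proof. induction n. unfold sumR; simpl; lra.
  rewrite sumR_cube_S. simpl wn.
  transitivity (sumR (cube n) (fun z => q ^ wn z) + sumR (cube n) (fun z => q * q ^ wn z)).
  - f_equal. 
  - rewrite sumR_scal, IHn. simpl. ring. Qed.

Lemma ball_pt n w : (4 * w < n)%nat -> 1 <= (4/3) ^ n * ((3/4) ^ 4) ^ w.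
Proof. intros H. replace n with (4 * w + (n - 4 * w))%nat by lia.
  rewrite pow_add, <- pow_mult.
  replace ((4/3) ^ (4 * w) * (4/3) ^ (n - 4 * w) * (3/4) ^ (4 * w)) with
    (((4/3) * (3/4)) ^ (4 * w) * (4/3) ^ (n - 4 * w)) by (rewrite Rpow_mult_distr; ring).
  replace (4/3 * (3/4)) with 1 by field. rewrite pow1, Rmult_1_l.
  apply pow_R1_Rle. lra. Qed.

Lemma ball_bound n x0 : length x0 = n ->
  sumR (cube n) (fun x => if Rlt_dec (4 * weight (xorv x x0)) (INR n) then 1 else 0) <= (337/192) ^ n.
Proof. intros Hl.
  apply Rle_trans with (sumR (cube n) (fun x => (4/3) ^ n * ((3/4) ^ 4) ^ wn (xorv x0 x))).
  - apply sumR_le. intros x Hx. destruct Rlt_dec as [H|H].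
    + apply ball_pt. rewrite xorv_comm, weight_wn in H. 
      apply INR_lt. rewrite mult_INR. simpl (INR 4). lra.
    + apply Rmult_le_pos; apply pow_le; lra.
  - rewrite sumR_scal. rewrite (shift n x0 (fun z => ((3/4)^4) ^ wn z)) by auto.
    rewrite sum_pow_wn, <- Rpow_mult_distr. right. f_equal. field. Qed.

Fixpoint msgs (k : nat) : list (list bool) :=
  match k with O => cube 0 | S k' => msgs k' ++ cube (S k') end.

Lemma msgs_in k m : (length m <= k)%nat -> In m (msgs k).
Proof. induction k; intros H; cbn [msgs].
  - destruct m; simpl in H; [simpl; now left| lia].
  - apply in_or_app. destruct (Nat.eq_dec (length m) (S k)) as [E|E].
    + right. rewrite <- E. apply in_cube.
    + left. apply IHk. lia. Qed.

Lemma msgs_len k : INR (length (msgs k)) = 2 ^ (S k) - 1.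
Proof. induction k. simpl; lra.
  cbn [msgs]. rewrite length_app, plus_INR, IHk, cube_length, pow_INR. simpl (INR 2).
  replace (1+1) with 2 by lra. simpl. lra. Qed.

Lemma cost_ge n M x : In x (cube n) -> (length (M x) <= proto_cost n M)%nat.
Proof. unfold proto_cost. generalize (cube n). intros l; induction l; simpl; intros H; [easy|].
  destruct H as [<-|H]; [lia|]. specialize (IHl H). lia. Qed.

Lemma le_sum_in {A} (l : list A) f a : In a l -> (forall b, In b l -> 0 <= f b) -> f a <= sumR l f.
Proof. induction l; simpl; intros H Hp; [easy|]. unfold sumR in *; simpl.
  destruct H as [<-|H].
  - assert (0 <= fold_right (fun a s => f a + s) 0 l) by (apply sumR_nonneg; auto). lra.
  - assert (0 <= f a0) by auto. assert (f a <= fold_right (fun a s => f a + s) 0 l) by auto. lra. Qed.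

Lemma q25 : 8 <= (384/337) ^ 25.
Proof. set (q := 384/337).
  assert (H2: 1.29 <= q ^ 2) by (unfold q; simpl; lra).
  assert (H4: 1.66 <= q ^ 4) by (replace (q^4) with ((q^2)^2) by ring; nra).
  assert (H8: 2.75 <= q ^ 8) by (replace (q^8) with ((q^4)^2) by ring; nra).
  assert (H16: 7.5 <= q ^ 16) by (replace (q^16) with ((q^8)^2) by ring; nra).
  assert (H1: 1 <= q) by (unfold q; lra).
  replace (q ^ 25) with (q ^ 16 * q ^ 8 * q) by ring. assert (q^16*q^8 >= 7.5*2.75) by nra. nra. Qed.

Lemma final_ineq n k : (1 <= n)%nat ->
  15 / 16 * 2 ^ n <= (2 ^ (S k) - 1) * (337/192) ^ n -> INR n / 25 <= INR k.
Proof. intros Hn H.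
  set (q := 384/337). set (r := 337/192).
  assert (Hqr : 2 ^ n = q ^ n * r ^ n) by (rewrite <- Rpow_mult_distr; unfold q, r; f_equal; field).
  rewrite Hqr in H.
  assert (Hr : 0 < r ^ n) by (apply pow_lt; unfold r; lra).
  assert (Hq1 : 1 <= q) by (unfold q; lra).
  destruct (Rle_dec (INR n / 25) (INR k)) as [|Hc]; auto. exfalso.
  assert (Hk : (25 * k < n)%nat) by (apply INR_lt; rewrite mult_INR; simpl (INR 25); lra).
  destruct k as [|k].
  - simpl in H. change (337/192) with r in H. assert (15/16 * q ^ n * r ^ n <= 1 * r ^ n) by (simpl in H; idtac; lra). assert (15/16 * q ^ n <= 1) by (eapply Rmult_le_reg_r; eauto).
    assert (q ^ 1 <= q ^ n) by (apply Rle_pow; auto).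
    unfold q in *; simpl in *; lra.
  - change (337/192) with r in H. assert (15/16 * q ^ n * r ^ n < 2 ^ S (S k) * r ^ n) by nra.
    assert (H1 : 15/16 * q ^ n < 2 ^ S (S k)) by (eapply Rmult_lt_reg_r; eauto).
    assert (Hqn : q ^ (25 * S k) <= q ^ n) by (apply Rle_pow; auto; lia).
    rewrite pow_mult in Hqn.
    assert (H8 : 8 ^ S k <= (q ^ 25) ^ S k) by (apply pow_incr; split; [lra|apply q25]).
    assert (H8' : 2 ^ S (S k) * 2 <= 8 ^ S k).
    { replace 8 with (2 ^ 3) by (simpl; lra). rewrite <- pow_mult.
      replace (2 ^ S (S k) * 2) with (2 ^ S (S (S k))) by (simpl; ring).
      apply Rle_pow; [lra|lia]. }
    assert (0 < 2 ^ S (S k)) by (apply pow_lt; lra).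
    lra.
Qed.

Theorem mainTheorem19 :
  forall c : R, 0 < c ->
  exists eps c' : R, 0 < eps /\ 0 < c' /\
    forall n : nat, Nat.Odd n ->
      D_one_way_ge n eps (xor_fun (hs n (c * sqrt (INR n)))) (c' * INR n).
Proof.
  intros c Hc. exists (c ^ 2 / 1024), (1 / 25).
  assert (Hc2 : 0 < c ^ 2) by (apply pow_lt; lra).
  split; [lra|]. split; [lra|].
  intros n _ M B Herr.
  destruct (Nat.eq_dec n 0) as [->|Hn0].
  { simpl. rewrite Rmult_0_r. apply pos_INR. }
  assert (Hn : (0 < n)%nat) by lia.
  set (alpha := c * sqrt (INR n)) in *.
  set (F := xor_fun (hs n alpha)) in *.
  set (C := cube n) in *.
  set (N := 2 ^ n).
  assert (HN : 0 < N) by (apply pow_lt; lra).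
  set (e := fun x => sumR C (fun y => (B (M x) y - F x y) ^ 2)).
  assert (He0 : forall x, 0 <= e x) by (intros; apply sumR_nonneg; intros; apply pow2_ge_0).
  assert (Hsum : sumR C e <= c ^ 2 / 1024 * (N * N)).
  { unfold proto_err in Herr. fold C F N in Herr.
    assert (0 < N * N) by nra.
    apply Rmult_le_reg_l with (/ (N * N)). apply Rinv_0_lt_compat; lra.
    replace (/ (N * N) * (c ^ 2 / 1024 * (N * N))) with (c ^ 2 / 1024) by (field; lra).
    exact Herr. }
  set (T := c ^ 2 * N / 64).
  assert (HT : 0 < T) by (unfold T; nra).
  set (good := fun x => if Rle_dec (e x) T then 1 else 0).
  set (bad := fun x => if Rle_dec (e x) T then 0 else 1).
  assert (Hbad : sumR C bad * T <= sumR C e).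
  { rewrite Rmult_comm, <- sumR_scal. apply sumR_le. intros x _. unfold bad.
    destruct Rle_dec; [rewrite Rmult_0_r; auto | lra]. }
  assert (HgbN : sumR C good + sumR C bad = N).
  { rewrite <- sumR_plus. transitivity (sumR C (fun _ => 1)).
    - apply sumR_ext; intros; unfold good, bad; destruct Rle_dec; lra.
    - rewrite sumR_const. unfold C. rewrite cube_length, pow_INR. replace (INR 2) with 2 by (simpl; lra). unfold N; lra. }
  assert (Hgood : 15 / 16 * N <= sumR C good).
  { assert (sumR C bad * T <= c ^ 2 / 1024 * (N * N)) by lra.
    assert (sumR C bad <= N / 16).
    { apply Rmult_le_reg_r with T; auto. unfold T in *. 
      replace (N / 16 * (c ^ 2 * N / 64)) with (c ^ 2 / 1024 * (N * N)) by field. lra. }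
    lra. }
  set (k := proto_cost n M).
  assert (Hclose : forall x x0, In x C -> In x0 C -> e x <= T -> e x0 <= T -> M x = M x0 ->
                   4 * weight (xorv x x0) < INR n).
  { intros x x0 Hx Hx0 Gx Gx0 HM.
    destruct (Rlt_dec (4 * weight (xorv x x0)) (INR n)) as [|Hf]; auto. exfalso.
    assert (HD := D_bound n c x x0 Hn Hc (cube_len _ _ Hx) (cube_len _ _ Hx0) (Rnot_lt_ge _ _ Hf)).
    fold alpha C in HD.
    assert (sumR C (fun y => (hs n alpha (xorv x y) - hs n alpha (xorv x0 y)) ^ 2) <= 2 * e x + 2 * e x0).
    { unfold e. rewrite <- !sumR_scal, <- sumR_plus. apply sumR_le. intros y _.
      unfold F, xor_fun. rewrite HM. 
      set (p := hs n alpha (xorv x y)). set (p0 := hs n alpha (xorv x0 y)). set (b := B (M x0) y).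
      assert (0 <= (2*b - p - p0)^2) by apply pow2_ge_0. simpl in *. nra. }
    fold N in HD. unfold T in *. lra. }
  assert (Hfib : forall m, sumR C (fun x => if Rle_dec (e x) T then (if list_eq_dec bool_dec (M x) m then 1 else 0) else 0) <= (337/192) ^ n).
  { intros m. destruct (classic (exists x0, In x0 C /\ e x0 <= T /\ M x0 = m)) as [[x0 [Hx0 [G0 HM0]]]|Hno].
    - eapply Rle_trans; [|apply (ball_bound n x0 (cube_len _ _ Hx0))].
      apply sumR_le. intros x Hx.
      destruct Rle_dec as [Gx|]; [|destruct Rlt_dec; lra].
      destruct list_eq_dec as [HM|]; [|destruct Rlt_dec; lra].
      destruct Rlt_dec as [|Hn']; [lra|]. exfalso. apply Hn'. apply Hclose; auto; congruence.
    - eapply Rle_trans with (sumR C (fun _ => 0)).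
      + apply Req_le, sumR_ext. intros x Hx. destruct Rle_dec; auto. destruct list_eq_dec; auto.
        exfalso; apply Hno; exists x; auto.
      + rewrite sumR_const, Rmult_0_r. left; apply pow_lt; lra. }
  assert (Hmsg : sumR C good <= INR (length (msgs k)) * (337/192) ^ n).
  { apply Rle_trans with (sumR C (fun x => sumR (msgs k) (fun m => if Rle_dec (e x) T then (if list_eq_dec bool_dec (M x) m then 1 else 0) else 0))).
    - apply sumR_le. intros x Hx. unfold good.
      destruct Rle_dec.
      + apply Rle_trans with (if list_eq_dec bool_dec (M x) (M x) then 1 else 0).
        * destruct list_eq_dec; [lra| congruence].
        * apply (le_sum_in (msgs k) (fun m => if list_eq_dec bool_dec (M x) m then 1 else 0)).
          -- apply msgs_in. apply cost_ge; auto.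
          -- intros; destruct list_eq_dec; lra.
      + apply sumR_nonneg; intros; lra.
    - rewrite sumR_swap. rewrite <- sumR_const. apply sumR_le. intros m _. apply Hfib. }
  rewrite msgs_len in Hmsg.
  assert (Hfin := final_ineq n k Hn). 
  assert (INR n / 25 <= INR k) by (apply Hfin; unfold N in *; lra).
  fold k. lra.
Qed.
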